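(* Let $f\in\mathbb{R}[\mathbf{x}]$, $\mathscr{A}=\operatorname{supp}(f)$, and $\mathscr{B}=\frac12\operatorname{New}(f)\cap\mathbb{N}^n$. Define $\mathscr{B}_0=\emptyset$ and, for $p\ge1$, $\mathscr{B}_p=\{\beta\in\mathscr{B}:\exists\gamma\in\mathscr{B}\text{ with }\beta+\gamma\in\mathscr{A}\cup2\mathscr{B}_{p-1}\}$, and let $\mathscr{B}_*=\bigcup_{p\ge1}\mathscr{B}_p$. If $f=(\mathbf{x}^{\mathscr{B}})^\intercal\mathbf{G}\,\mathbf{x}^{\mathscr{B}}$ for some scaled diagonally dominant symmetric matrix $\mathbf{G}$ indexed by $\mathscr{B}$, then $f=(\mathbf{x}^{\mathscr{B}_*})^\intercal\tilde{\mathbf{G}}\,\mathbf{x}^{\mathscr{B}_*}$ for some scaled diagonally dominant symmetric matrix $\tilde{\mathbf{G}}$ indexed by $\mathscr{B}_*$.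
   Context: $\operatorname{New}(f)$ is the Newton polytope of $f$, the convex hull of $\operatorname{supp}(f)\subseteq\mathbb{N}^n$; $2S=\{2\beta:\beta\in S\}$; $\mathbf{x}^{S}=(\mathbf{x}^\beta)_{\beta\in S}$. A symmetric matrix $\mathbf{G}$ is diagonally dominant if $\mathbf{G}_{ii}\ge\sum_{j\ne i}|\mathbf{G}_{ij}|$ for every $i$, and scaled diagonally dominant if $\mathbf{D}\mathbf{G}\mathbf{D}$ is diagonally dominant for some positive definite diagonal matrix $\mathbf{D}$. *)

(* Defs.v *)
From HB Require Import structures.
From mathcomp Require Import all_boot all_order all_algebra.
From mathcomp.multinomials Require Import mpoly.
From Stdlib Require Import ClassicalEpsilon.

Set Implicit Arguments.
Unset Strict Implicit.
Unset Printing Implicit Defensive.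

Import Order.TTheory GRing.Theory Num.Theory.
Local Open Scope ring_scope.

(* Classical decision of a proposition, used to carve finite subsets of *)
(* monomials out of a finite box by a non-boolean predicate.            *)
Definition pb (P : Prop) : bool :=
  if excluded_middle_informative P then true else false.

Section Defs.
Variables (n : nat) (R : realFieldType).

Definition in_newton (f : {mpoly R[n]}) (x : 'I_n -> R) : Prop :=
  exists w : 'X_{1..n} -> R,
    (forall a, a \in msupp f -> 0 <= w a) /\
    \sum_(a <- msupp f) w a = 1 /\
    (forall i : 'I_n, x i = \sum_(a <- msupp f) w a * ((a i)%:R)).

(* Candidate exponents: all monomials of total degree < msize f (the     *)
(* lattice points of (1/2)New(f) all lie in this box).                  *)
Definition mbox (d : nat) : seq 'X_{1..n} :=
  [seq val m | m <- enum {: bmultinom n d }].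

Definition halfNewton (f : {mpoly R[n]}) : seq 'X_{1..n} :=
  [seq b : 'X_{1..n} <- mbox (msize f) | pb (in_newton f (fun i => (2 * b i)%:R))].

Fixpoint Bp (f : {mpoly R[n]}) (p : nat) : seq 'X_{1..n} :=
  match p with
  | 0 => [::]
  | p'.+1 =>
      [seq b <- halfNewton f |
        has (fun g => ((b + g)%MM \in msupp f) ||
                      ((b + g)%MM \in [seq (c + c)%MM | c <- Bp f p']))
            (halfNewton f)]
  end.

Definition Bstar (f : {mpoly R[n]}) : seq 'X_{1..n} :=
  [seq b <- halfNewton f | pb (exists p, (0 < p)%N /\ b \in Bp f p)].

(* (x^S)^T G x^S for a matrix G indexed by the (duplicate-free) list S *)
Definition gram (S : seq 'X_{1..n}) (G : 'X_{1..n} -> 'X_{1..n} -> R)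
  : {mpoly R[n]} :=
  \sum_(b <- S) \sum_(c <- S) G b c *: 'X_[(b + c)%MM].

Definition sym_on (S : seq 'X_{1..n}) (G : 'X_{1..n} -> 'X_{1..n} -> R) :=
  forall b c, b \in S -> c \in S -> G b c = G c b.

Definition diag_dom_on (S : seq 'X_{1..n}) (G : 'X_{1..n} -> 'X_{1..n} -> R) :=
  forall b, b \in S -> \sum_(c <- S | c != b) `|G b c| <= G b b.

Definition sdd_on (S : seq 'X_{1..n}) (G : 'X_{1..n} -> 'X_{1..n} -> R) :=
  exists d : 'X_{1..n} -> R,
    (forall b, b \in S -> 0 < d b) /\
    diag_dom_on S (fun b c => d b * G b c * d c).

End Defs.

(* Main.v *)
Require Import Defs.
From HB Require Import structures.
From mathcomp Require Import all_boot all_order all_algebra.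
From mathcomp.multinomials Require Import mpoly.
From Stdlib Require Import ClassicalEpsilon.
Import Order.TTheory GRing.Theory Num.Theory.
Local Open Scope ring_scope.

Lemma pbE (P : Prop) : pb P = true <-> P.
Proof. rewrite /pb; case: excluded_middle_informative => //. Qed.

Lemma coef_gram n (R : realFieldType) (S : seq 'X_{1..n}) (H : 'X_{1..n} -> 'X_{1..n} -> R) (m : 'X_{1..n}) :
  (gram S H)@_m = \sum_(b <- S) \sum_(c <- S) (if (b + c)%MM == m then H b c else 0).
Proof.
rewrite /gram raddf_sum; apply: eq_bigr => b _.
rewrite raddf_sum; apply: eq_bigr => c _.
by rewrite /= mcoeffZ mcoeffX; case: eqP => _; rewrite ?mulr1 ?mulr0.
Qed.

Theorem proposition7p2 (n : nat) (R : realFieldType) (f : {mpoly R[n]})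
    (G : 'X_{1..n} -> 'X_{1..n} -> R) :
  sym_on (halfNewton f) G ->
  sdd_on (halfNewton f) G ->
  f = gram (halfNewton f) G ->
  exists G' : 'X_{1..n} -> 'X_{1..n} -> R,
    [/\ sym_on (Bstar f) G', sdd_on (Bstar f) G' & f = gram (Bstar f) G'].
Proof.
move=> Hsym [d [dpos Hdd]] Hf.
set B := halfNewton f.
set inS := fun m : 'X_{1..n} => exists b' c', [/\ b' \in B, b' \notin Bstar f, c' \in B & (b' + c')%MM = m].
pose G' b c := if pb (inS (b + c)%MM) then 0 else G b c.
have BsB b : b \in Bstar f -> b \in B by rewrite mem_filter => /andP[].
have inBs b : b \in B -> (exists p, (0 < p)%N /\ b \in Bp f p) -> b \in Bstar f.
  by move=> bB H; rewrite mem_filter bB andbT; apply/pbE.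
have FA m : inS m -> m \notin msupp f.
  move=> [b' [c' [b'B b'N c'B <-]]]; apply/negP => hm.
  move/negP: b'N; apply; apply: inBs => //; exists 1%N; split => //.
  rewrite /= mem_filter b'B andbT; apply/hasP; exists c' => //; by rewrite hm.
have FB b : b \in Bstar f -> ~ inS (b + b)%MM.
  rewrite mem_filter => /andP[/pbE [p [p0 hp]] bB].
  move=> [b' [c' [b'B b'N c'B e]]].
  move/negP: b'N; apply; apply: inBs => //; exists p.+1; split => //.
  rewrite /= mem_filter b'B andbT; apply/hasP; exists c' => //.
  by rewrite e; apply/orP; right; apply/mapP; exists b.
have G'd b : b \in Bstar f -> G' b b = G b b.
  by move=> hb; rewrite /G'; case E: (pb _) => //; move/pbE: E => /(FB b hb).
exists G'; split.
- move=> b c hb hc; rewrite /G' addmC Hsym //; exact: BsB.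
- exists d; split; first by move=> b /BsB; exact: dpos.
  move=> b hb; rewrite G'd //.
  apply: le_trans (Hdd b (BsB b hb)).
  rewrite /Bstar big_filter_cond big_mkcond [X in _ <= X]big_mkcond /=.
  apply: ler_sum => c _.
  case: (pb _) => /=; last by case: (c != b).
  case: (c != b) => //; rewrite /G'; case: (pb _) => //.
  by rewrite mulr0 mul0r normr0.
- apply/mpolyP => m; rewrite coef_gram.
  case hm: (pb (inS m)).
    move/pbE: hm => hm.
    rewrite (memN_msupp_eq0 (FA _ hm)) big1 // => b _; rewrite big1 // => c _.
    case: eqP => // e; rewrite /G' e.
    by have -> : pb (inS m) = true by apply/pbE.
  have hm' : ~ inS m by move=> h; move/pbE: h; rewrite hm.
  rewrite {1}Hf coef_gram.
  rewrite (bigID (fun b => b \in Bstar f)) /= [X in _ + X]big_seq_cond [X in _ + X]big1 ?addr0; last first.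
    move=> b /andP[bB hb]; rewrite big_seq big1 // => c cB; case: eqP => // e.
    by exfalso; apply: hm'; exists b, c; split => //.
  rewrite [RHS]big_filter [LHS]big_seq_cond [RHS]big_seq_cond.
  apply: eq_big => [b|b /andP[bB hb]].
    by rewrite /Bstar [X in _ && X = _]mem_filter andbCA andbb andbC.
  rewrite [RHS]big_filter [RHS]big_seq_cond (bigID (fun c => c \in Bstar f)) /=.
  rewrite [X in _ + X]big_seq_cond [X in _ + X]big1 ?addr0; last first.
    move=> c /andP[cB hc]; case: eqP => // e.
    by exfalso; apply: hm'; exists c, b; split => //; rewrite addmC.
  rewrite big_seq_cond; apply: eq_big => [c|c /andP[cB hc]].
    by rewrite /Bstar [X in _ && X = _]mem_filter andbCA andbb andbC.
  case: eqP => // e; rewrite /G' e.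
  by have -> : pb (inS m) = false by [].
Qed.
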